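(* Let $(\mathcal T(n))_{n\in\mathbb N}$ be the triangle Markov chain obtained by iterated random barycentric subdivision, $J_n=J(\mathcal T(n))$, and $\mathcal T_n$ the $\sigma$-algebra generated by $\mathcal T(0),\dots,\mathcal T(n)$. Then for every $n\in\mathbb N$, $$\mathbb E[J_{n+1}\mid\mathcal T_n]=\frac43 J_n .$$
   Context: A triangle is given by three points of the plane which are not all equal. Barycentric subdivision: if a triangle has vertices $A,B,C$, let $D,E,F$ be the midpoints of $[A,B],[B,C],[C,A]$ and $G$ its barycenter; the medians cut it into the six triangles $\{A,D,G\},\{D,B,G\},\{B,E,G\},\{E,C,G\},\{C,F,G\},\{F,A,G\}$. The triangle Markov chain: $\mathcal T(0)$ is given and $\mathcal T(n+1)$ is chosen uniformly among the six triangles of the barycentric subdivision of $\mathcal T(n)$, independently of the past. For a triangle $\mathcal T$, $J(\mathcal T)\in(0,+\infty]$ is the sum of the squares of the lengths of its edges divided by its area ($J=+\infty$ for flat, i.e. zero-area, triangles). *)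

(* Defs.v *)
From HB Require Import structures.
From mathcomp Require Import all_boot all_order all_algebra.
From mathcomp Require Import reals constructive_ereal.
Set Implicit Arguments. Unset Strict Implicit. Unset Printing Implicit Defensive.
Import Order.TTheory GRing.Theory Num.Theory.
Local Open Scope ring_scope.

Section Triangles.
Variable R : realType.

Definition point := (R * R)%type.
Definition triangle := (point * point * point)%type.

Definition midpoint (p q : point) : point :=
  ((p.1 + q.1) / 2, (p.2 + q.2) / 2).
Definition barycenter (a b c : point) : point :=
  ((a.1 + b.1 + c.1) / 3, (a.2 + b.2 + c.2) / 3).
Definition sqdist (p q : point) : R := (p.1 - q.1) ^+ 2 + (p.2 - q.2) ^+ 2.

Definition not_all_equal (t : triangle) : bool :=
  let: (a, b, c) := t in ~~ ((a == b) && (b == c)).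

Definition area (t : triangle) : R :=
  let: (a, b, c) := t in
  `|(b.1 - a.1) * (c.2 - a.2) - (b.2 - a.2) * (c.1 - a.1)| / 2.

Definition J (t : triangle) : \bar R :=
  let: (a, b, c) := t in
  if area t == 0 then +oo%E
  else ((sqdist a b + sqdist b c + sqdist c a) / area t)%:E.

Definition subdiv (t : triangle) : seq triangle :=
  let: (A, B, C) := t in
  let D := midpoint A B in let E := midpoint B C in let F := midpoint C A in
  let G := barycenter A B C in
  [:: (A, D, G); (D, B, G); (B, E, G); (E, C, G); (C, F, G); (F, A, G)].

Definition child (k : 'I_6) (t : triangle) : triangle := nth t (subdiv t) k.

(* the chain driven by the choices w 0, w 1, ..., w (N-1) in 'I_6:
   T(0) = T0, T(m+1) = child (w m) (T(m)) for m < N. *)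
Fixpoint chain (T0 : triangle) (N : nat) (w : {ffun 'I_N -> 'I_6}) (m : nat)
  : triangle :=
  match m with
  | 0 => T0
  | m'.+1 => let t := chain T0 w m' in
             oapp (fun i : 'I_N => child (w i) t) t (insub m')
  end.

End Triangles.

(* Elementary conditional expectation on a finite sample space with the
   uniform probability, w.r.t. the sigma-algebra generated by Y : Omega -> V
   (its atoms are the level sets of Y, all of positive probability). *)
Definition condexp (R : realType) (Omega : finType) (V : eqType)
  (X : Omega -> \bar R) (Y : Omega -> V) (w : Omega) : \bar R :=
  ((#|[set w' | Y w' == Y w]|%:R)^-1 : R)%:E *
  (\sum_(w' | Y w' == Y w) X w')%E.

(* Main.v *)
Require Import Defs.
From HB Require Import structures.
From mathcomp Require Import all_boot all_order all_algebra.
From mathcomp Require Import reals constructive_ereal.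
From mathcomp Require Import ring lra zify.
Set Implicit Arguments. Unset Strict Implicit. Unset Printing Implicit Defensive.
Import Order.TTheory GRing.Theory Num.Theory.
Local Open Scope ring_scope.
Definition sq (R : realType) (t : triangle R) : R :=
  let: (a, b, c) := t in sqdist a b + sqdist b c + sqdist c a.

Lemma JE (R : realType) (t : triangle R) :
  J t = if area t == 0 then +oo%E else (sq t / area t)%:E.
Proof. by case: t => [[a b] c]. Qed.

Lemma absL (R : realType) (x y : R) : x = y / 6 -> `|x| / 2 = `|y| / 2 / 6.
Proof. move=> ->; rewrite normrM (ger0_norm (_ : 0 <= 6^-1)) //; last by rewrite invr_ge0.
  by rewrite mulrAC. Qed.

Lemma area_child (R : realType) (k : 'I_6) (t : triangle R) :
  area (child k t) = area t / 6.
Proof.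
case: t => [[[a1 a2] [b1 b2]] [c1 c2]].
case: k => [[|[|[|[|[|[|k]]]]]] Hk] //;
rewrite /child /subdiv /= /area /midpoint /barycenter /=; by apply: absL; field.
Qed.

Lemma sq_child (R : realType) (t : triangle R) :
  \sum_(k < 6) sq (child k t) = 4 / 3 * sq t.
Proof.
case: t => [[[a1 a2] [b1 b2]] [c1 c2]].
rewrite !big_ord_recr big_ord0 /=.
rewrite /child /subdiv /= /sq /sqdist /midpoint /barycenter /=; by field.
Qed.
Lemma chainS (R : realType) (T0 : triangle R) N (w : {ffun 'I_N -> 'I_6}) m
  (H : (m < N)%N) : chain T0 w m.+1 = child (w (Ordinal H)) (chain T0 w m).
Proof. by rewrite /= insubT /=. Qed.

Lemma chain_ext (R : realType) (T0 : triangle R) N (w1 w2 : {ffun 'I_N -> 'I_6}) m :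
  (m <= N)%N -> (forall i : 'I_N, (i < m)%N -> w1 i = w2 i) ->
  chain T0 w1 m = chain T0 w2 m.
Proof.
elim: m => [//|m IH] HmN Hw.
rewrite !(chainS _ _ HmN) IH ?(ltnW HmN) //; last by move=> i Hi; apply: Hw; apply: ltnW.
by rewrite Hw.
Qed.

Definition shift n (k : 'I_6) (w : {ffun 'I_n.+1 -> 'I_6}) : {ffun 'I_n.+1 -> 'I_6} :=
  [ffun i => if i == ord_max then (w i + k)%R else w i].

Lemma shift_bij n k : bijective (@shift n k).
Proof.
exists (shift (- k)) => w; apply/ffunP => i; rewrite !ffunE;
  case: eqP => // _; by rewrite ?addrK ?subrK.
Qed.
Theorem lemma5 (R : realType) (T0 : triangle R) (hT0 : not_all_equal T0)
  (n : nat) (w : {ffun 'I_n.+1 -> 'I_6}) :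
  condexp (fun w' => J (chain T0 w' n.+1))
          (fun w' => [seq chain T0 w' m | m <- iota 0 n.+1]) w
  = ((4 / 3 : R)%:E * J (chain T0 w n))%E.
Proof.
set Y := (fun w' : {ffun 'I_n.+1 -> 'I_6} => [seq chain T0 w' m | m <- iota 0 n.+1]).
rewrite /condexp.
set t := chain T0 w n.
have HY : forall w', Y w' == Y w -> chain T0 w' n = t.
  move=> w' /eqP E; have := congr1 (fun s => nth t s n) E.
  by rewrite !(nth_map 0%N) ?size_iota // nth_iota.
have HS : forall k w', Y (shift k w') = Y w'.
  move=> k w'; rewrite /Y; apply/eq_in_map => m; rewrite mem_iota add0n => Hm.
  apply: chain_ext; first exact: ltnW. move=> i Hi; rewrite ffunE; case: eqP => // Hi'.
  by move: Hi Hm; rewrite Hi' /=; lia.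
set P := fun w' => Y w' == Y w.
have -> : (\sum_(w' | Y w' == Y w) J (chain T0 w' n.+1) =
           \sum_(w' | P w') J (child (w' ord_max) t))%E.
  apply: eq_bigr => w' Hw'; by rewrite (chainS _ _ (ltnSn n)) HY.
have Pw : P w by rewrite /P.
have cardS : (0 < #|[set w' | Y w' == Y w]|)%N.
  by apply/card_gt0P; exists w; rewrite inE.
have key : forall (h : 'I_6 -> R),
    (\sum_(w' | P w') h (w' ord_max)) *+ 6 =
    (\sum_(k < 6) h k) *+ #|[set w' | Y w' == Y w]|.
  move=> h.
  rewrite (_ : _ *+ 6 = \sum_(k < 6) \sum_(w' | P w') h (w' ord_max)); last by rewrite sumr_const card_ord.
  transitivity (\sum_(k < 6) \sum_(w' | P w') h (w' ord_max + k)%R).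
    apply: eq_bigr => k _.
    rewrite (reindex (shift k)); last by apply: onW_bij; apply: shift_bij.
    apply: eq_big => [w'|w' _]; first by rewrite /P HS.
    by rewrite ffunE eqxx.
  rewrite exchange_big /=.
  transitivity (\sum_(w' | P w') \sum_(k < 6) h k).
    apply: eq_bigr => w' _.
    rewrite [RHS](reindex (fun k => (w' ord_max + k)%R)) //.
    apply: onW_bij; exists (fun k => (k - w' ord_max)%R) => k.
      by rewrite addrC addKr.
    by rewrite subrKC.
  rewrite sumr_const; congr (_ *+ _).
  by rewrite cardsE; apply: eq_card => x; rewrite /P /in_mem /=.
have Ha := area_child.
have Hsq := sq_child t.
case: (eqVneq (area t) 0) => Ht.
- have -> : (\sum_(w' | P w') J (child (w' ord_max) t) = +oo)%E.
    rewrite (bigD1 w) //= JE Ha Ht mul0r eqxx addye //.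
    rewrite gt_eqF // (lt_le_trans ltNy0) //; apply: sume_ge0.
    by move=> w0 _; rewrite JE Ha Ht mul0r eqxx leey.
  rewrite JE Ht eqxx !gt0_muley // lte_fin ?invr_gt0 ?ltr0n //.
  lra.
- have Ha0 : forall k, area (child k t) != 0.
    by move=> k; rewrite Ha mulf_neq0 // invr_eq0 pnatr_eq0.
  under eq_bigr => w' _ do rewrite JE (negbTE (Ha0 _)).
  rewrite sumEFin JE (negbTE Ht) -EFinM; congr EFin.
  set c := #|_|.
  have Hc : (c%:R : R) != 0 by rewrite pnatr_eq0 -lt0n.
  have Hk := key (fun k => sq (child k t) / area (child k t)).
  have E2 : \sum_(k < 6) sq (child k t) / area (child k t) = 8 * (sq t / area t).
    under eq_bigr => k _ do rewrite Ha invfM mulrA.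
    by rewrite -!mulr_suml Hsq invrK; field.
  rewrite E2 -mulr_natr -[X in _ = X]mulr_natr in Hk.
  apply: (mulfI Hc); rewrite mulrA divff // mul1r.
  apply: (mulIf (_ : (6:R) != 0)); first by rewrite pnatr_eq0.
  by rewrite mulr_natr Hk /c; field.
Qed.
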